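(* Let $d_1,d_2\ge1$. Consider the gate $\Gamma_C$ with vertices $v_{i,j}$ ($i\in[d_1]$, $j\in[d_2]$), each with signature $\mathtt{PASS}$ (incident edges ordered north, east, south, west), where $v_{i,j}$'s east edge is $v_{i,j+1}$'s west edge and $v_{i,j}$'s south edge is $v_{i+1,j}$'s north edge; its dangling edges form four groups $x_1=(x_{1,1},\dots,x_{1,d_1})$, $x_2=(x_{2,1},\dots,x_{2,d_2})$, $y_1\in\{0,1\}^{d_1}$, $y_2\in\{0,1\}^{d_2}$, where $x_{1,i}$ is the west edge of $v_{i,1}$, the east edge of $v_{i,d_2}$ is the $(d_1+1-i)$-th edge of $y_1$, $x_{2,j}$ is the north edge of $v_{1,j}$, and the south edge of $v_{d_1,j}$ is the $(d_2+1-j)$-th edge of $y_2$. Then $$\mathrm{Sig}(\Gamma_C)(x_1,x_2,y_1,y_2)=C(x_1,x_2,y_1,y_2):=(-1)^{\mathtt{ODD}(x_1)\mathtt{ODD}(x_2)}[y_1=x_1^{-1}][y_2=x_2^{-1}],$$ and the grid cap function $O(x_1,x_2,y_1,y_2):=[y_1=x_1^{-1}][y_2=x_2^{-1}]$ satisfies, for all arguments, $$O=\tfrac12\big(1+(-1)^{\mathtt{ODD}(x_1)}+(-1)^{\mathtt{ODD}(x_2)}-(-1)^{\mathtt{ODD}(x_1)+\mathtt{ODD}(x_2)}\big)\cdot C.$$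
   Context: $\mathtt{PASS}(1111)=-1$, $\mathtt{PASS}(0000)=\mathtt{PASS}(0101)=\mathtt{PASS}(1010)=1$, $\mathtt{PASS}=0$ otherwise (bits ordered north, east, south, west). $\mathtt{ODD}(x)$ is the Hamming weight of $x$ mod $2$. For a string $x=x_1\cdots x_d$, $x^{-1}=x_d\cdots x_1$ is its reversal. $[\varphi]$ is $1$ if $\varphi$ holds and $0$ otherwise. The signature of a gate $\Gamma$ with dangling edge set $D$ is $\mathrm{Sig}(\Gamma,x)=\sum_{y\in\{0,1\}^{E(\Gamma)\setminus D}}w_\Gamma(xy)\prod_v f_v((xy)|_{I(v)})$, with $w_\Gamma(z)$ the product of the weights of active edges (here all weights are $1$). *)

(* Defs.v *)
From HB Require Import structures.
From mathcomp Require Import all_boot all_order all_algebra.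
Set Implicit Arguments. Unset Strict Implicit. Unset Printing Implicit Defensive.
Import Order.TTheory GRing.Theory Num.Theory.
Local Open Scope ring_scope.

(* A bit string of length n is a function 'I_n -> bool (0-based positions). *)
Definition bits (n : nat) := {ffun 'I_n -> bool}.

(* nat-indexed access (out-of-range positions are never used below) *)
Definition getb n (f : bits n) (k : nat) : bool :=
  if insub k is Some o then f o else false.
Definition getb2 m n (f : {ffun 'I_m * 'I_n -> bool}) (a b : nat) : bool :=
  match insub a, insub b with Some o, Some p => f (o, p) | _, _ => false end.

Definition PASS (N E S W : bool) : rat :=
  match N, E, S, W with
  | true, true, true, true => -1
  | false, false, false, false => 1
  | false, true, false, true => 1
  | true, false, true, false => 1
  | _, _, _, _ => 0
  end.

Definition ODD n (x : bits n) : bool := odd #|[pred i | x i]|.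

Definition revb n (x : bits n) : bits n := [ffun i => x (rev_ord i)].

(* Edges of the grid gate Gamma_C (0-based: vertex v_{i,j} with i < d1, j < d2).
   H (i,j) : internal horizontal edge = east edge of v_{i,j} = west edge of v_{i,j+1}, j < d2-1.
   V (i,j) : internal vertical edge = south edge of v_{i,j} = north edge of v_{i+1,j}, i < d1-1. *)
Section Grid.
Variables (d1 d2 : nat) (x1 : bits d1) (x2 : bits d2) (y1 : bits d1) (y2 : bits d2)
  (H : {ffun 'I_d1 * 'I_d2.-1 -> bool}) (V : {ffun 'I_d1.-1 * 'I_d2 -> bool}).

Definition westE (i j : nat) : bool :=
  if j == 0%N then getb x1 i else getb2 H i j.-1.
Definition eastE (i j : nat) : bool :=
  if j == d2.-1 then getb y1 (d1.-1 - i) else getb2 H i j.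
Definition northE (i j : nat) : bool :=
  if i == 0%N then getb x2 j else getb2 V i.-1 j.
Definition southE (i j : nat) : bool :=
  if i == d1.-1 then getb y2 (d2.-1 - j) else getb2 V i j.

Definition gridWeight : rat :=
  \prod_(i < d1) \prod_(j < d2) PASS (northE i j) (eastE i j) (southE i j) (westE i j).
End Grid.

(* Sig(Gamma_C)(x1,x2,y1,y2): sum over assignments of the internal edges
   (all edge weights are 1). *)
Definition SigGrid d1 d2 (x1 : bits d1) (x2 : bits d2) (y1 : bits d1) (y2 : bits d2) : rat :=
  \sum_(H : {ffun 'I_d1 * 'I_d2.-1 -> bool})
   \sum_(V : {ffun 'I_d1.-1 * 'I_d2 -> bool}) gridWeight x1 x2 y1 y2 H V.

Definition Ocap d1 d2 (x1 : bits d1) (x2 : bits d2) (y1 : bits d1) (y2 : bits d2) : rat :=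
  (y1 == revb x1)%:R * (y2 == revb x2)%:R.

Definition Cfun d1 d2 (x1 : bits d1) (x2 : bits d2) (y1 : bits d1) (y2 : bits d2) : rat :=
  (-1) ^+ (ODD x1 * ODD x2)%N * (y1 == revb x1)%:R * (y2 == revb x2)%:R.

(* Main.v *)
Require Import Defs.
From HB Require Import structures.
From mathcomp Require Import all_boot all_order all_algebra zify ring.
Set Implicit Arguments. Unset Strict Implicit. Unset Printing Implicit Defensive.
Import Order.TTheory GRing.Theory Num.Theory.
Local Open Scope ring_scope.

Lemma getbE k (f : bits k) (o : 'I_k) : getb f o = f o.
Proof. by rewrite /getb valK. Qed.
Lemma getb2E a b (f : {ffun 'I_a * 'I_b -> bool}) (o : 'I_a) (p : 'I_b) :
  getb2 f o p = f (o,p).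
Proof. by rewrite /getb2 !valK. Qed.

Lemma PASS_nz a b c d : PASS a b c d != 0 -> a = c /\ b = d.
Proof. by case: a; case: b; case: c; case: d. Qed.

Section S.
Variables (m n : nat) (x1 : bits m.+1) (x2 : bits n.+1) (y1 : bits m.+1) (y2 : bits n.+1).

Lemma gw_nz (H : {ffun 'I_m.+1 * 'I_n -> bool}) (V : {ffun 'I_m * 'I_n.+1 -> bool}) :
  gridWeight x1 x2 y1 y2 H V != 0 ->
  [/\ H = [ffun p => x1 p.1], V = [ffun p => x2 p.2], y1 = revb x1 & y2 = revb x2].
Proof.
move=> nz.
have hv (i : 'I_m.+1) (j : 'I_n.+1) :
    @northE m.+1 n.+1 x2 V i j = @southE m.+1 n.+1 y2 V i j /\ @eastE m.+1 n.+1 y1 H i j = @westE m.+1 n.+1 x1 H i j.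
  apply: PASS_nz.
  move/prodf_neq0: nz => /(_ i isT) /prodf_neq0 /(_ j isT); done.
have hw (i : 'I_m.+1) j : (j < n.+1)%N -> @westE m.+1 n.+1 x1 H i j = getb x1 i.
  elim: j => [|j IH] hj; first by [].
  have hj' : (j < n.+1)%N by apply: ltnW.
  have := (hv i (Ordinal hj')).2 => /=.
  rewrite -IH //= /eastE /westE /=.
  have -> : (j == n) = false by apply/negbTE/eqP; lia.
  by [].
have hn (j : 'I_n.+1) i : (i < m.+1)%N -> @northE m.+1 n.+1 x2 V i j = getb x2 j.
  elim: i => [|i IH] hi; first by [].
  have hi' : (i < m.+1)%N by apply: ltnW.
  have := (hv (Ordinal hi') j).1 => /=.
  rewrite -IH //= /southE /northE /=.
  have -> : (i == m) = false by apply/negbTE/eqP; lia.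
  by [].
split.
- apply/ffunP => -[i j]; rewrite ffunE /=.
  have hj : (j < n.+1)%N by apply: (ltn_trans (ltn_ord j)).
  have := (hv i (Ordinal hj)).2; rewrite hw //= /eastE /=.
  have -> : (val j == n) = false by apply/negbTE; rewrite neq_ltn ltn_ord.
  by rewrite getb2E getbE.
- apply/ffunP => -[i j]; rewrite ffunE /=.
  have hi : (i < m.+1)%N by apply: (ltn_trans (ltn_ord i)).
  have := (hv (Ordinal hi) j).1; rewrite hn //= /southE /=.
  have -> : (val i == m) = false by apply/negbTE; rewrite neq_ltn ltn_ord.
  by rewrite getb2E getbE => ->.
- apply/ffunP => k; rewrite ffunE.
  have := (hv (rev_ord k) ord_max).2; rewrite hw //= /eastE /= eqxx.
  have -> : (m - (m.+1 - k.+1))%N = k by have := ltn_ord k; lia.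
  by move=> h; rewrite -(getbE y1 k) -(getbE x1 (rev_ord k)); exact: h.
- apply/ffunP => k; rewrite ffunE.
  have := (hv ord_max (rev_ord k)).1; rewrite hn //= /southE /= eqxx.
  have -> : (n - (n.+1 - k.+1))%N = k by have := ltn_ord k; lia.
  by move=> h; rewrite -(getbE y2 k) -(getbE x2 (rev_ord k)); exact/esym.
Qed.

Lemma getb_rev k (x : bits k.+1) (j : 'I_k.+1) : getb (revb x) (k - j) = x j.
Proof.
have h : (k - j < k.+1)%N by lia.
rewrite (getbE _ (Ordinal h)) ffunE; congr (x _); apply: val_inj => /=.
have := ltn_ord j; lia.
Qed.

Lemma sum_card k (x : bits k) : \big[addn/0%N]_(i < k) (x i : nat) = #|[pred i | x i]|.
Proof.
rewrite -sum1_card [RHS]big_mkcond; apply: eq_bigr => i _; rewrite inE; by case: (x i).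
Qed.

Lemma gw_val : gridWeight x1 x2 (revb x1) (revb x2) [ffun p => x1 p.1] [ffun p => x2 p.2]
  = (-1) ^+ (ODD x1 * ODD x2).
Proof.
rewrite /gridWeight.
transitivity (\prod_(i < m.+1) \prod_(j < n.+1) (-1) ^+ (nat_of_bool (x1 i && x2 j)) : rat).
  apply: eq_bigr => i _; apply: eq_bigr => j _.
  have eN : @northE m.+1 n.+1 x2 [ffun p => x2 p.2] i j = x2 j.
    rewrite /northE; case: (i) => [[|i'] hi] /=; first by rewrite getbE.
    have hi' : (i' < m)%N by lia.
    by rewrite (getb2E _ (Ordinal hi') j) ffunE.
  have eS : @southE m.+1 n.+1 (revb x2) [ffun p => x2 p.2] i j = x2 j.
    rewrite /southE /=; case: eqP => [_|hi]; first by rewrite getb_rev.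
    have hi' : (i < m)%N by have := ltn_ord i; lia.
    by rewrite (getb2E _ (Ordinal hi') j) ffunE.
  have eW : @westE m.+1 n.+1 x1 [ffun p => x1 p.1] i j = x1 i.
    rewrite /westE; case: (j) => [[|j'] hj] /=; first by rewrite getbE.
    have hj' : (j' < n)%N by lia.
    by rewrite (getb2E _ i (Ordinal hj')) ffunE.
  have eE : @eastE m.+1 n.+1 (revb x1) [ffun p => x1 p.1] i j = x1 i.
    rewrite /eastE /=; case: eqP => [_|hj]; first by rewrite getb_rev.
    have hj' : (j < n)%N by have := ltn_ord j; lia.
    by rewrite (getb2E _ i (Ordinal hj')) ffunE.
  rewrite eN eS eW eE; by case: (x1 i); case: (x2 j).
under eq_bigr do rewrite prodrXr.
rewrite prodrXr.
have -> : (\sum_(i < m.+1) \sum_(j < n.+1) (x1 i && x2 j : nat))%N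
   = (#|[pred i | x1 i]| * #|[pred j | x2 j]|)%N.
  rewrite -!sum_card big_distrl /=; apply: eq_bigr => i _.
  rewrite big_distrr /=; apply: eq_bigr => j _; by case: (x1 i); case: (x2 j).
rewrite /ODD -signr_odd oddM.
by case: (odd _); case: (odd _).
Qed.
End S.

Theorem mainTheorem9 (d1 d2 : nat) (hd1 : (1 <= d1)%N) (hd2 : (1 <= d2)%N)
    (x1 : bits d1) (x2 : bits d2) (y1 : bits d1) (y2 : bits d2) :
  SigGrid x1 x2 y1 y2 = Cfun x1 x2 y1 y2 /\
  Ocap x1 x2 y1 y2 =
    2^-1 * (1 + (-1) ^+ ODD x1 + (-1) ^+ ODD x2 - (-1) ^+ (ODD x1 + ODD x2)%N)
      * Cfun x1 x2 y1 y2.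
Proof.
split; last first.
  rewrite /Ocap /Cfun.
  case: (ODD x1); case: (ODD x2); case: (_ == _); case: (_ == _); rewrite /=; field; done.
case: d1 hd1 x1 y1 => [//|m] _ x1 y1.
case: d2 hd2 x2 y2 => [//|n] _ x2 y2.
case E: ((y1 == revb x1) && (y2 == revb x2)).
- move/andP: E => [/eqP-> /eqP->].
  rewrite /SigGrid /Cfun !eqxx !mulr1.
  rewrite (bigD1 [ffun p => x1 p.1]) //= [X in _ + X]big1 ?addr0; last first.
    move=> H hH; apply: big1 => V _; apply/eqP; apply: contraT => nz.
    have [hH' _ _ _] := gw_nz nz; by rewrite hH' eqxx in hH.
  rewrite (bigD1 [ffun p => x2 p.2]) //= [X in _ + X]big1 ?addr0 ?gw_val //.
  move=> V hV; apply/eqP; apply: contraT => nz.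
  have [_ hV' _ _] := gw_nz nz; by rewrite hV' eqxx in hV.
- have -> : Cfun x1 x2 y1 y2 = 0.
    rewrite /Cfun; move/negbT: E; rewrite negb_and => /orP [] /negbTE ->;
      by rewrite ?mulr0 ?mul0r.
  apply: big1 => H _; apply: big1 => V _; apply/eqP; apply: contraT => nz.
  have [_ _ a b] := gw_nz nz; by rewrite a b !eqxx in E.
Qed.
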